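(* Let $h(x)=\frac{1}{e^x-1}$. For every integer $k\ge1$ and $\varepsilon>0$, $$D_{2,k}^\varepsilon:=\int_\varepsilon^\infty\frac{x^kh^{(k)}(x)}{e^x-1}dx=\sum_{j=1}^{k+1}(-1)^{j+1}K_{k+1,j}\,Z_\varepsilon(k,j).$$
   Context: For integers $0\le j\le m$, $K_{m,j}=\frac1m\binom mjB_{m-j}+\delta_{j,m-1}$, where $B_n$ are Bernoulli numbers ($\frac{t}{e^t-1}=\sum_nB_n\frac{t^n}{n!}$) and $\delta$ is the Kronecker delta. For $\varepsilon>0$ and integers $k,j\ge0$, $Z_\varepsilon(k,j)=\sum_{q=1}^\infty q^j\int_\varepsilon^\infty e^{-qy}y^kdy$. *)

(* Defs.v *)
From Stdlib Require Import Reals List.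
From Coquelicot Require Import Coquelicot.
Open Scope R_scope.

(* Bernoulli numbers with the convention t/(e^t-1) = sum_n B_n t^n/n!
   (so B_1 = -1/2), given by the recurrence equivalent to that generating
   function:  B_0 = 1,  B_n = -1/(n+1) * sum_{i<n} C(n+1,i) B_i. *)
Fixpoint bern_list (n : nat) : list R :=
  match n with
  | O => 1 :: nil
  | S m =>
      let l := bern_list m in
      let s := List.fold_right Rplus 0
                 (List.map (fun i => Binomial.C (S n) i * List.nth i l 0) (List.seq 0 n)) in
      l ++ ((- / INR (S n)) * s) :: nil
  end.

Definition bernoulli (n : nat) : R := List.nth n (bern_list n) 0.

Definition Kcoef (m j : nat) : R :=
  / INR m * Binomial.C m j * bernoulli (m - j) + (if Nat.eqb j (m - 1) then 1 else 0).

Definition Zeps (eps : R) (k j : nat) : R :=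
  Series (fun q : nat =>
    INR (S q) ^ j *
    RInt_gen (fun y => exp (- INR (S q) * y) * y ^ k)
             (at_point eps) (Rbar_locally p_infty)).

Definition hfun (x : R) : R := / (exp x - 1).

(* Main.v *)
Require Import Defs.
From Stdlib Require Import Reals Lra Lia List Factorial.
From Coquelicot Require Import Coquelicot.
Open Scope R_scope.

Lemma fold_plus_c (l : list R) c : fold_right Rplus c l = fold_right Rplus 0 l + c.
Proof. induction l; simpl; [ring| rewrite IHl; ring]. Qed.

Lemma fold_sum (g : nat -> R) m :
  fold_right Rplus 0 (map g (seq 0 (S m))) = sum_f_R0 g m.
Proof.
  induction m.
  - simpl. ring.
  - rewrite seq_S, map_app, fold_right_app, fold_plus_c, IHm. simpl. ring.
Qed.

Lemma bern_list_S m : bern_list (S m) = bern_list m ++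
  ((- / INR (S (S m))) * fold_right Rplus 0
     (map (fun i => Binomial.C (S (S m)) i * nth i (bern_list m) 0) (seq 0 (S m)))) :: nil.
Proof. reflexivity. Qed.

Lemma bern_len n : length (bern_list n) = S n.
Proof. induction n; [reflexivity|]. rewrite bern_list_S, length_app, IHn. simpl. lia. Qed.

Lemma bern_nth m i : (i <= m)%nat -> nth i (bern_list m) 0 = bernoulli i.
Proof.
  induction m; intros H.
  - assert (i = 0%nat) by lia. subst. reflexivity.
  - destruct (Nat.eq_dec i (S m)) as [->|Hne]; [reflexivity|].
    rewrite bern_list_S, app_nth1 by (rewrite bern_len; lia). apply IHm; lia.
Qed.

Lemma bern_rec m : bernoulli (S m) =
  - / INR (S (S m)) * sum_f_R0 (fun i => Binomial.C (S (S m)) i * bernoulli i) m.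
Proof.
  unfold bernoulli at 1. rewrite bern_list_S, app_nth2 by (rewrite bern_len; lia).
  rewrite bern_len, Nat.sub_diag. cbn [nth]. rewrite fold_sum. f_equal.
  apply sum_eq. intros i Hi. rewrite bern_nth by lia. reflexivity.
Qed.

Lemma fact_neq0 n : INR (fact n) <> 0.
Proof. apply INR_fact_neq_0. Qed.

Lemma C_Sn_n n : Binomial.C (S n) n = INR (S n).
Proof.
  unfold Binomial.C. replace (S n - n)%nat with 1%nat by lia.
  rewrite fact_simpl, mult_INR. simpl (fact 1). simpl (INR 1).
  field. apply fact_neq0.
Qed.

Lemma bern_sum0 m :
  sum_f_R0 (fun i => Binomial.C (S (S m)) i * bernoulli i) (S m) = 0.
Proof.
  simpl sum_f_R0 at 1. rewrite C_Sn_n, bern_rec.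
  assert (INR (S (S m)) <> 0) by (apply not_0_INR; lia). field. auto.
Qed.

Lemma bern_sum m :
  sum_f_R0 (fun l => Binomial.C m l * bernoulli l) m =
  bernoulli m + (if Nat.eqb m 1 then 1 else 0).
Proof.
  destruct m as [|[|m]].
  - simpl. rewrite C_n_n. ring.
  - simpl. rewrite C_n_n, C_n_0. replace (bernoulli 0) with 1 by reflexivity. ring.
  - rewrite tech5, bern_sum0, C_n_n. replace (if (S (S m) =? 1)%nat then 1 else 0) with 0 by reflexivity. ring.
Qed.

Lemma sum_swap (f : nat -> nat -> R) N M :
  sum_f_R0 (fun i => sum_f_R0 (fun j => f i j) N) M =
  sum_f_R0 (fun j => sum_f_R0 (fun i => f i j) M) N.
Proof.
  induction M.
  - simpl. reflexivity.
  - rewrite tech5, IHM, <- plus_sum. apply sum_eq. intros. rewrite tech5. reflexivity.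
Qed.

Lemma sum_extend (f : nat -> R) m N : (m <= N)%nat ->
  sum_f_R0 f m = sum_f_R0 (fun i => if Nat.leb i m then f i else 0) N.
Proof.
  intros H. induction N.
  - assert (m = 0%nat) by lia. subst. simpl. reflexivity.
  - destruct (Nat.eq_dec m (S N)) as [->|Hne].
    + apply sum_eq. intros i Hi. destruct (Nat.leb_spec i (S N)); [reflexivity| lia].
    + rewrite tech5, <- IHN by lia. destruct (Nat.leb_spec (S N) m); [lia| ring].
Qed.

Lemma sum_rev (f : nat -> R) n :
  sum_f_R0 f n = sum_f_R0 (fun i => f (n - i)%nat) n.
Proof.
  revert f. induction n; intros f.
  - reflexivity.
  - rewrite decomp_sum by lia. simpl pred. rewrite IHn, tech5.
    rewrite Nat.sub_diag. rewrite Rplus_comm. f_equal.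
    apply sum_eq. intros i Hi. f_equal. lia.
Qed.

Lemma sum_ind (g : nat -> R) p N : (p <= N)%nat ->
  sum_f_R0 (fun i => if Nat.eqb i p then g i else 0) N = g p.
Proof.
  intros H. induction N.
  - assert (p = 0%nat) by lia. subst. reflexivity.
  - rewrite tech5. destruct (Nat.eq_dec p (S N)) as [->|Hne].
    + rewrite Nat.eqb_refl.
      rewrite (sum_eq _ (fun _ => 0)).
      * rewrite sum_cte. ring.
      * intros i Hi. destruct (Nat.eqb_spec i (S N)); [lia|reflexivity].
    + rewrite IHN by lia. destruct (Nat.eqb_spec (S N) p); [lia|ring].
Qed.

Lemma C_swap n l i : (l + i <= n)%nat ->
  Binomial.C n l * Binomial.C (n - l) i = Binomial.C n i * Binomial.C (n - i) l.
Proof.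
  intros H. unfold Binomial.C.
  replace (n - l - i)%nat with (n - i - l)%nat by lia.
  pose proof (fact_neq0 n). pose proof (fact_neq0 l). pose proof (fact_neq0 i).
  pose proof (fact_neq0 (n-l)). pose proof (fact_neq0 (n-i)). pose proof (fact_neq0 (n-i-l)).
  field. repeat split; auto.
Qed.

Definition Bp (n : nat) (y : R) :=
  sum_f_R0 (fun l => Binomial.C n l * bernoulli l * y ^ (n - l)) n.

Lemma Bp_alt n y : Bp n y = sum_f_R0 (fun j => Binomial.C n j * bernoulli (n - j) * y ^ j) n.
Proof.
  unfold Bp. rewrite sum_rev. apply sum_eq. intros i Hi.
  rewrite <- pascal_step1 by lia. f_equal. f_equal. lia.
Qed.

Lemma sum_scal_l (f : nat -> R) c N :
  sum_f_R0 (fun i => c * f i) N = c * sum_f_R0 f N.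
Proof. rewrite scal_sum. apply sum_eq. intros. ring. Qed.

Lemma pow_neg a j : (-a)^j = (-1)^j * a^j.
Proof. replace (-a) with (-1 * a) by ring. apply Rpow_mult_distr. Qed.

Lemma Bp_shift n y : (1 <= n)%nat -> Bp n (y+1) = Bp n y + INR n * y^(n-1).
Proof.
  intros Hn. unfold Bp at 1.
  transitivity (sum_f_R0 (fun l => sum_f_R0 (fun i =>
     if Nat.leb i (n-l) then Binomial.C n l * bernoulli l * (Binomial.C (n-l) i * y^i) else 0) n) n).
  { apply sum_eq; intros l Hl. rewrite binomial.
    rewrite (sum_extend _ (n-l) n) by lia. rewrite scal_sum. apply sum_eq; intros i Hi.
    destruct (Nat.leb i (n-l)); [rewrite pow1; ring | ring]. }
  rewrite sum_swap.
  transitivity (sum_f_R0 (fun i => Binomial.C n i * y^i *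
      sum_f_R0 (fun l => Binomial.C (n-i) l * bernoulli l) (n-i)) n).
  { apply sum_eq; intros i Hi. rewrite (sum_extend _ (n-i) n) by lia. rewrite scal_sum.
    apply sum_eq; intros l Hl.
    destruct (Nat.leb_spec i (n-l)), (Nat.leb_spec l (n-i)); try lia.
    - assert (HC := C_swap n l i ltac:(lia)).
      transitivity (Binomial.C n l * Binomial.C (n-l) i * bernoulli l * y^i); [ring|rewrite HC; ring].
    - ring. }
  transitivity (sum_f_R0 (fun i => Binomial.C n i * bernoulli (n-i) * y^i) n +
     sum_f_R0 (fun i => if Nat.eqb i (n-1) then Binomial.C n i * y^i else 0) n).
  { rewrite <- plus_sum. apply sum_eq; intros i Hi. rewrite bern_sum.
    destruct (Nat.eqb_spec (n-i) 1), (Nat.eqb_spec i (n-1)); try lia; ring. }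
  rewrite <- Bp_alt, sum_ind by lia.
  destruct n as [|m]; [lia|]. replace (S m - 1)%nat with m by lia. rewrite C_Sn_n. ring.
Qed.

Lemma faul n x : (2 <= n)%nat ->
  sum_f_R0 (fun j => (-1)^(j+1) * Kcoef n j * ((x+1)^j - x^j)) n = (-1)^(n-1) * x^(n-1).
Proof.
  intros Hn.
  transitivity (sum_f_R0 (fun j => (-/INR n) * (Binomial.C n j * bernoulli (n-j) * (-(x+1))^j)) n
    + sum_f_R0 (fun j => /INR n * (Binomial.C n j * bernoulli (n-j) * (-x)^j)) n
    + sum_f_R0 (fun j => if Nat.eqb j (n-1) then (-1)^(j+1) * ((x+1)^j - x^j) else 0) n).
  { rewrite <- !plus_sum. apply sum_eq; intros j Hj. unfold Kcoef.
    rewrite (pow_neg (x+1) j), (pow_neg x j), pow_add.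
    destruct (Nat.eqb j (n-1)); ring. }
  rewrite !sum_scal_l, <- !Bp_alt, sum_ind by lia.
  replace (-x) with (-(x+1) + 1) by ring. rewrite Bp_shift by lia.
  rewrite pow_neg. assert (INR n <> 0) by (apply not_0_INR; lia).
  rewrite pow_add. field. auto.
Qed.

Definition pw (n : nat) : nat -> R := fun m => INR m ^ n.
Definition rad1 (a : nat -> R) := Rbar_le 1 (CV_radius a).

Lemma rad1_lt a z : rad1 a -> 0 <= z < 1 -> Rbar_lt (Rabs z) (CV_radius a).
Proof.
  intros H Hz. apply Rbar_lt_le_trans with 1; [|exact H].
  simpl. rewrite Rabs_pos_eq by lra. lra.
Qed.

Lemma rad1_ext a b : (forall n, a n = b n) -> rad1 a -> rad1 b.
Proof. intros H. unfold rad1. rewrite (CV_radius_ext a b H). auto. Qed.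

Lemma rad1_const c : rad1 (fun _ => c).
Proof.
  unfold rad1. destruct (CV_radius_bounded (fun _ => c)) as [Hub _].
  apply Hub. exists (Rabs c). intros n. rewrite pow1, Rmult_1_r. lra.
Qed.

Lemma rad1_dom a b : (forall n, Rabs (b n) <= Rabs (a n)) -> rad1 a -> rad1 b.
Proof.
  intros Hd Ha. unfold rad1 in *. apply Rbar_le_trans with (1 := Ha).
  destruct (CV_radius_bounded a) as [_ Hla].
  destruct (CV_radius_bounded b) as [Hub _].
  apply Hla. intros r [M HM]. apply Hub. exists M. intros n.
  eapply Rle_trans; [|apply (HM n)]. rewrite !Rabs_mult.
  apply Rmult_le_compat_r; [apply Rabs_pos|apply Hd].
Qed.

Lemma rad1_mulN a : rad1 a -> rad1 (fun n => INR n * a n).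
Proof.
  intros H. apply rad1_ext with (PS_incr_1 (PS_derive a)).
  - intros [|n]; simpl; [unfold zero; simpl; ring|]. unfold PS_derive. reflexivity.
  - unfold rad1. rewrite CV_radius_incr_1, CV_radius_derive. exact H.
Qed.

Lemma rad1_pw n : rad1 (pw n).
Proof.
  induction n.
  - apply rad1_ext with (fun _ => 1); [intros; reflexivity| apply rad1_const].
  - apply rad1_ext with (fun m => INR m * pw n m); [intros; reflexivity| apply rad1_mulN; auto].
Qed.

Lemma expm_bounds x : 0 < x -> 0 < exp (-x) < 1.
Proof.
  intros Hx. split; [apply exp_pos|]. rewrite <- exp_0. apply exp_increasing. lra.
Qed.

Lemma is_derive_eq (f : R -> R) (x l lp : R) : is_derive f x l -> l = lp -> is_derive f x lp.
Proof. intros H <-. exact H. Qed.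

Lemma PSexp_derive a x : rad1 a -> 0 < x ->
  is_derive (fun y => PSeries a (exp (-y))) x (- PSeries (fun n => INR n * a n) (exp (-x))).
Proof.
  intros Ha Hx. pose proof (expm_bounds x Hx) as Hz.
  eapply is_derive_eq.
  - apply (is_derive_comp (PSeries a) (fun y => exp (-y))).
    + apply is_derive_PSeries. apply rad1_lt; auto; lra.
    + auto_derive; auto.
  - unfold scal; simpl. unfold mult; simpl.
    replace (- (1) * exp (- x) * PSeries (PS_derive a) (exp (- x))) with
      (- (exp (- x) * PSeries (PS_derive a) (exp (- x)))) by ring.
    rewrite <- PSeries_incr_1.
    rewrite (PSeries_ext (PS_incr_1 (PS_derive a)) (fun n => INR n * a n)); [ring|].
    intros [|n]; simpl; [unfold zero; simpl; ring|]. unfold PS_derive. reflexivity.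
Qed.

Lemma PS_pw0 z : 0 <= z < 1 -> PSeries (pw 0) z = / (1 - z).
Proof.
  intros Hz. rewrite PSeries_eq. rewrite <- Series_geom by (rewrite Rabs_pos_eq; lra).
  apply Series_ext. intros n. unfold pw, scal; simpl. unfold mult; simpl. rewrite pow_n_pow. ring.
Qed.

Lemma hfun_pw x : 0 < x -> hfun x = PSeries (pw 0) (exp (-x)) - 1.
Proof.
  intros Hx. pose proof (expm_bounds x Hx). rewrite PS_pw0 by lra.
  unfold hfun. rewrite exp_Ropp.
  assert (1 < exp x) by (rewrite <- exp_0; apply exp_increasing; lra).
  field. split; lra.
Qed.

Lemma Dn_hfun n : forall x, 0 < x ->
  Derive_n hfun n x = (-1)^n * PSeries (pw n) (exp (-x)) - (if Nat.eqb n 0 then 1 else 0).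
Proof.
  induction n; intros x Hx.
  - simpl. rewrite hfun_pw by auto. ring.
  - simpl Derive_n.
    rewrite (Derive_ext_loc _ (fun y => (-1)^n * PSeries (pw n) (exp (-y)) - (if Nat.eqb n 0 then 1 else 0))).
    2:{ apply (filter_imp (fun y => 0 < y)); [intros; apply IHn; auto| apply open_gt; auto]. }
    apply is_derive_unique. eapply is_derive_eq.
    + apply (is_derive_minus (fun y => (-1)^n * PSeries (pw n) (exp (-y))) (fun _ => _)).
      * apply is_derive_scal. apply PSexp_derive; [apply rad1_pw|auto].
      * apply is_derive_const.
    + unfold minus, plus, opp, zero; simpl.
      rewrite (PSeries_ext _ (pw (S n))) by (intros; reflexivity). ring.
Qed.

Lemma PS_lin (c : nat -> R) (b : nat -> nat -> R) z N :
  (forall j, ex_pseries (b j) z) ->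
  ex_pseries (fun m => sum_f_R0 (fun j => c j * b j m) N) z /\
  PSeries (fun m => sum_f_R0 (fun j => c j * b j m) N) z =
  sum_f_R0 (fun j => c j * PSeries (b j) z) N.
Proof.
  intros Hb. induction N.
  - simpl. split.
    + apply ex_pseries_ext with (PS_scal (c 0%nat) (b 0%nat)); [intros; reflexivity|].
      apply ex_pseries_scal; [apply Rmult_comm| apply Hb].
    + rewrite <- PSeries_scal. apply PSeries_ext. intros; reflexivity.
  - destruct IHN as [He Hq]. simpl. split.
    + apply ex_pseries_ext with (PS_plus (fun m => sum_f_R0 (fun j => c j * b j m) N)
                                         (PS_scal (c (S N)) (b (S N)))); [intros; reflexivity|].
      apply ex_pseries_plus; auto. apply ex_pseries_scal; [apply Rmult_comm| apply Hb].
    + assert (Hs : ex_pseries (PS_scal (c (S N)) (b (S N))) z)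
        by (apply ex_pseries_scal; [apply Rmult_comm| apply Hb]).
      rewrite <- Hq, <- PSeries_scal, <- PSeries_plus by auto.
      apply PSeries_ext. intros; reflexivity.
Qed.

Lemma sum_zero (f : nat -> R) N : (forall i, (i <= N)%nat -> f i = 0) -> sum_f_R0 f N = 0.
Proof. intros H. rewrite (sum_eq f (fun _ => 0)) by auto. rewrite sum_cte. ring. Qed.

Definition acoef (k j : nat) : R := (-1)^(j+1) * Kcoef (k+1) j.

Lemma faul2 k x : (1 <= k)%nat ->
  sum_f_R0 (fun j => acoef k (S j) * ((x+1)^(S j) - x^(S j))) k = (-1)^k * x^k.
Proof.
  intros Hk. pose proof (faul (k+1) x ltac:(lia)) as H.
  rewrite decomp_sum in H by lia. replace (pred (k+1)) with k in H by lia.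
  replace (k + 1 - 1)%nat with k in H by lia.
  rewrite <- H. simpl pow at 3 4. rewrite Rminus_diag, Rmult_0_r, Rplus_0_l.
  apply sum_eq. intros. unfold acoef. reflexivity.
Qed.

Lemma T_lemma k x : (1 <= k)%nat -> 0 < x ->
  Derive_n hfun k x / (exp x - 1) =
  sum_f_R0 (fun j => acoef k (S j) * PSeries (pw (S j)) (exp (-x))) k.
Proof.
  intros Hk Hx. pose proof (expm_bounds x Hx) as Hz. set (z := exp (-x)) in *.
  rewrite Dn_hfun by auto.
  replace (if Nat.eqb k 0 then 1 else 0) with 0 by (destruct k; [lia|reflexivity]).
  destruct (PS_lin (fun j => acoef k (S j)) (fun j => pw (S j)) z k) as [Hex Heq].
  { intros j. apply CV_radius_inside, rad1_lt; [apply rad1_pw| lra]. }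
  rewrite <- Heq. set (A := fun m => sum_f_R0 (fun j => acoef k (S j) * pw (S j) m) k) in *.
  assert (H : PSeries A z * (1 - z) = (-1)^k * (z * PSeries (pw k) z)).
  { replace (PSeries A z * (1 - z)) with (PSeries A z - z * PSeries A z) by ring.
    rewrite <- PSeries_incr_1, <- PSeries_minus; auto; [|apply ex_pseries_incr_1; auto].
    rewrite <- PSeries_incr_1, <- PSeries_scal. apply PSeries_ext.
    intros [|m]; unfold PS_minus, PS_scal, PS_incr_1; unfold plus, opp, zero, scal; simpl;
      unfold mult; simpl.
    - unfold A. rewrite sum_zero; [ring|]. intros i _. unfold pw. simpl. ring.
    - replace ((-1)^k * pw k m) with ((-1)^k * INR m ^ k) by reflexivity.
      rewrite <- (faul2 k (INR m)) by auto.
      transitivity (sum_f_R0 (fun j => acoef k (S j) * pw (S j) (S m)) k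
         - sum_f_R0 (fun j => acoef k (S j) * pw (S j) m) k); [unfold A; ring|].
      rewrite <- minus_sum. apply sum_eq. intros i _. unfold pw. rewrite S_INR. ring. }
  replace (exp x) with (/ z) by (unfold z; rewrite exp_Ropp, Rinv_inv; reflexivity).
  apply Rmult_eq_reg_r with (1 - z); [|lra]. rewrite H. fold z. field. split; [lra|]. intro Hc. assert (/z = 1) by lra. assert (z = 1) by (rewrite <- (Rinv_inv z); rewrite H0; apply Rinv_1). lra.
Qed.

Definition wi (w : nat -> R) (p : nat) : nat -> R := fun q => w q / INR q ^ p.
Definition Qf (w : nat -> R) (p : nat) (x : R) := PSeries (wi w p) (exp (-x)).
Definition cc (k i : nat) : R := INR (fact k) / INR (fact i).
Definition Fanti (w : nat -> R) (k : nat) (x : R) :=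
  - sum_f_R0 (fun i => cc k i * x^i * Qf w (k+1-i) x) k.

Lemma rad1_wi w p : rad1 w -> rad1 (wi w p).
Proof.
  apply rad1_dom. intros q. unfold wi, Rdiv. rewrite Rabs_mult.
  apply Rle_trans with (Rabs (w q) * 1); [|lra]. apply Rmult_le_compat_l; [apply Rabs_pos|].
  destruct q as [|q].
  - destruct p; simpl.
    + rewrite Rinv_1, Rabs_R1. lra.
    + rewrite Rmult_0_l, Rinv_0, Rabs_R0. lra.
  - assert (H1 : 1 <= INR (S q) ^ p) by (apply pow_R1_Rle; rewrite S_INR; pose proof (pos_INR q); lra).
    rewrite Rabs_pos_eq by (left; apply Rinv_0_lt_compat; lra).
    rewrite <- Rinv_1. apply Rinv_le_contravar; lra.
Qed.

Lemma wi_step w p n : w 0%nat = 0 -> INR n * wi w (S p) n = wi w p n.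
Proof.
  intros Hw. unfold wi. destruct n as [|n].
  - rewrite Hw. simpl. unfold Rdiv. ring.
  - assert (INR (S n) <> 0) by (apply not_0_INR; lia).
    assert (INR (S n) ^ p <> 0) by (apply pow_nonzero; auto).
    replace (INR (S n) ^ S p) with (INR (S n) * INR (S n) ^ p) by reflexivity. field. auto.
Qed.

Lemma Qf_derive w p x : rad1 w -> w 0%nat = 0 -> 0 < x ->
  is_derive (Qf w (S p)) x (- Qf w p x).
Proof.
  intros Hw Hw0 Hx. unfold Qf. eapply is_derive_eq.
  - apply PSexp_derive; auto. apply rad1_wi; auto.
  - rewrite (PSeries_ext _ (wi w p)); auto. intros; apply wi_step; auto.
Qed.

Lemma cc_step k m : cc k (S m) * INR (S m) = cc k m.
Proof.
  unfold cc. rewrite fact_simpl, mult_INR. pose proof (fact_neq0 m).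
  assert (INR (S m) <> 0) by (apply not_0_INR; lia). field. auto.
Qed.

Lemma is_derive_extR (f g : R -> R) (x l : R) :
  (forall t : R, f t = g t) -> is_derive f x l -> is_derive g x l.
Proof. intros H. apply is_derive_ext. exact H. Qed.

Lemma is_derive_plusR (f g : R -> R) (x a b : R) :
  is_derive f x a -> is_derive g x b -> is_derive (fun y => f y + g y) x (a + b).
Proof. intros; apply (is_derive_plus f g); auto. Qed.

Lemma is_derive_multR (f g : R -> R) (x a b : R) :
  is_derive f x a -> is_derive g x b -> is_derive (fun y => f y * g y) x (a * g x + f x * b).
Proof. intros; apply (is_derive_mult f g); auto. apply Rmult_comm. Qed.

Lemma tel w k m x : rad1 w -> w 0%nat = 0 -> (m <= k)%nat -> 0 < x ->
  is_derive (fun y => sum_f_R0 (fun i => cc k i * y^i * Qf w (k+1-i) y) m) x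
    (- (cc k m * x^m * Qf w (k-m) x)).
Proof.
  intros Hw Hw0 Hm Hx. induction m.
  - apply is_derive_extR with (fun y => cc k 0 * Qf w (S k) y).
    { intros t. cbn [sum_f_R0]. replace (k + 1 - 0)%nat with (S k) by lia. rewrite pow_O. ring. }
    eapply is_derive_eq; [apply is_derive_scal, Qf_derive; auto|].
    replace (k - 0)%nat with k by lia. rewrite pow_O. ring.
  - set (p := (k - S m)%nat).
    assert (Hp1 : (k + 1 - S m)%nat = S p) by (unfold p; lia).
    assert (Hp2 : (k - m)%nat = S p) by (unfold p; lia).
    apply is_derive_extR with (fun y =>
       sum_f_R0 (fun i => cc k i * y^i * Qf w (k+1-i) y) m +
       (cc k (S m) * y^(S m)) * Qf w (S p) y).
    { intros t. cbn [sum_f_R0]. rewrite Hp1. reflexivity. }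
    eapply is_derive_eq.
    + apply is_derive_plusR; [apply IHm; lia|].
      apply is_derive_multR; [|apply Qf_derive; auto].
      apply is_derive_scal. apply (is_derive_pow (fun y => y)). apply is_derive_id.
    + rewrite Hp2. rewrite <- (cc_step k m).
      replace (@one R_AbsRing) with 1 by reflexivity. cbn [Init.Nat.pred]. fold p.
      rewrite <- tech_pow_Rmult. ring.
Qed.

Lemma Fanti_derive w k x : rad1 w -> w 0%nat = 0 -> 0 < x ->
  is_derive (Fanti w k) x (x^k * PSeries w (exp (-x))).
Proof.
  intros Hw Hw0 Hx. unfold Fanti. eapply is_derive_eq.
  - apply (is_derive_opp (fun y => sum_f_R0 (fun i => cc k i * y^i * Qf w (k+1-i) y) k)).
    apply tel; auto.
  - replace (@opp R_NormedModule) with Ropp by reflexivity.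
    rewrite Nat.sub_diag. unfold Qf, cc.
    rewrite (PSeries_ext (wi w 0) w) by (intros; unfold wi; rewrite pow_O; field).
    field. apply fact_neq0.
Qed.

Lemma fact_pos n : 0 < INR (fact n).
Proof. apply lt_0_INR. apply Nat.neq_0_lt_0. apply fact_neq_0. Qed.

Lemma xi_exp_lim i : is_lim (fun x => x^i * exp (-x)) p_infty 0.
Proof.
  apply is_lim_spec. intros eps. pose proof (cond_pos eps) as Heps.
  set (F := INR (fact (S i))). assert (HF : 0 < F) by apply fact_pos.
  exists (Rmax 1 (F / eps)). intros x Hx.
  pose proof (Rmax_l 1 (F/eps)). pose proof (Rmax_r 1 (F/eps)).
  assert (Hx1 : 1 < x) by lra. assert (Hx2 : F / eps < x) by lra.
  assert (Hpi : 0 < x^i) by (apply pow_lt; lra).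
  assert (HpS : 0 < x^(S i)) by (apply pow_lt; lra).
  assert (Hexp : x^(S i) / F <= exp x).
  { eapply Rle_trans; [|apply (exp_ge_taylor x (S i)); lra]. rewrite tech5.
    assert (0 <= sum_f_R0 (fun k => x ^ k / INR (fact k)) i).
    { apply cond_pos_sum. intros n. apply Rmult_le_pos; [apply pow_le; lra|].
      left. apply Rinv_0_lt_compat, fact_pos. }
    fold F. lra. }
  rewrite Rminus_0_r, Rabs_pos_eq by (apply Rmult_le_pos; [lra| left; apply exp_pos]).
  rewrite exp_Ropp.
  assert (0 < x^(S i)/F) by (apply Rdiv_lt_0_compat; lra).
  apply Rle_lt_trans with (x^i * (F / x^(S i))).
  - apply Rmult_le_compat_l; [lra|].
    replace (F / x^(S i)) with (/ (x^(S i)/F)) by (field; lra).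
    apply Rinv_le_contravar; auto.
  - rewrite <- tech_pow_Rmult.
    replace (x^i * (F / (x * x^i))) with (F / x) by (field; lra).
    assert (F < eps * x).
    { replace F with (eps * (F / eps)) by (field; lra). apply Rmult_lt_compat_l; lra. }
    unfold Rdiv. apply Rmult_lt_reg_r with x; [lra|].
    rewrite Rmult_assoc, Rinv_l, Rmult_1_r by lra. lra.
Qed.

Lemma Qf_lim w p i : rad1 w -> w 0%nat = 0 ->
  is_lim (fun x => x^i * Qf w (S p) x) p_infty 0.
Proof.
  intros Hw Hw0.
  set (G := PSeries (PS_decr_1 (wi w (S p)))).
  apply is_lim_ext_loc with (fun x => (x^i * exp (-x)) * G (exp (-x))).
  { exists 0. intros x Hx. pose proof (expm_bounds x Hx). unfold Qf.
    rewrite (PSeries_decr_1 (wi w (S p))).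
    - unfold wi at 1. rewrite Hw0. unfold G. unfold Rdiv. ring.
    - apply CV_radius_inside, rad1_lt; [apply rad1_wi; auto| lra]. }
  replace (Finite 0) with (Rbar_mult 0 (G 0)) by (simpl; rewrite Rmult_0_l; reflexivity).
  apply is_lim_mult; [apply xi_exp_lim| |simpl; auto].
  assert (H0 : is_lim (fun x => exp (-x)) p_infty 0).
  { apply is_lim_ext with (fun x => x^0 * exp (-x)); [intros; rewrite pow_O; ring|].
    apply xi_exp_lim. }
  unfold is_lim. eapply filterlim_comp; [exact H0|].
  apply (proj1 (continuity_pt_filterlim G 0)).
  apply PSeries_continuity. rewrite CV_radius_decr_1.
  apply rad1_lt; [apply rad1_wi; auto| lra].
Qed.

Lemma Fanti_lim w k : rad1 w -> w 0%nat = 0 -> is_lim (Fanti w k) p_infty 0.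
Proof.
  intros Hw Hw0.
  assert (Hs : forall m, (m <= k)%nat ->
    is_lim (fun x => sum_f_R0 (fun i => cc k i * x^i * Qf w (k+1-i) x) m) p_infty 0).
  { induction m; intros Hm.
    - apply is_lim_ext with (fun x => cc k 0 * (x^0 * Qf w (S k) x)).
      { intros y. cbn [sum_f_R0]. replace (k + 1 - 0)%nat with (S k) by lia. ring. }
      replace (Finite 0) with (Rbar_mult (cc k 0) 0) by (simpl; f_equal; ring).
      apply is_lim_scal_l. apply Qf_lim; auto.
    - set (p := (k - S m)%nat).
      assert (Hp1 : (k + 1 - S m)%nat = S p) by (unfold p; lia).
      apply is_lim_ext with (fun x => sum_f_R0 (fun i => cc k i * x^i * Qf w (k+1-i) x) m
          + cc k (S m) * (x^(S m) * Qf w (S p) x)).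
      { intros y. cbn [sum_f_R0]. rewrite Hp1. ring. }
      replace (Finite 0) with (Finite (0 + 0)) by (f_equal; ring).
      apply is_lim_plus'; [apply IHm; lia|].
      replace 0 with (cc k (S m) * 0) by ring.
      apply (is_lim_scal_l _ (cc k (S m)) p_infty 0). apply Qf_lim; auto. }
  unfold Fanti. replace (Finite 0) with (Rbar_opp 0) by (simpl; f_equal; ring).
  apply is_lim_opp. apply Hs. lia.
Qed.

Lemma main_int w k eps : rad1 w -> w 0%nat = 0 -> 0 < eps ->
  is_RInt_gen (fun x => x^k * PSeries w (exp (-x))) (at_point eps) (Rbar_locally p_infty)
    (sum_f_R0 (fun i => cc k i * eps^i * Qf w (k+1-i) eps) k).
Proof.
  intros Hw Hw0 He.
  assert (HD : forall x, 0 < x -> is_derive (Fanti w k) x (x^k * PSeries w (exp (-x))))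
    by (intros; apply Fanti_derive; auto).
  assert (Hg : forall x, 0 < x -> ex_derive (fun y => y^k * PSeries w (exp (-y))) x).
  { intros x Hx. eexists. apply is_derive_multR.
    - apply (is_derive_pow (fun y => y)). apply is_derive_id.
    - apply PSexp_derive; auto. }
  replace (sum_f_R0 (fun i => cc k i * eps^i * Qf w (k+1-i) eps) k)
    with (0 - Fanti w k eps) by (unfold Fanti; ring).
  apply (is_RInt_gen_ext (Derive (Fanti w k))).
  - apply Filter_prod with (fun a => a = eps) (fun b => eps < b).
    + reflexivity.
    + exists eps. auto.
    + intros a b -> Hb y Hy. simpl in Hy. rewrite Rmin_left, Rmax_right in Hy by lra.
      apply is_derive_unique, HD; lra.
  - apply is_RInt_gen_Derive.
    + apply Filter_prod with (fun a => a = eps) (fun b => eps < b).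
      * reflexivity.
      * exists eps. auto.
      * intros a b -> Hb y Hy. simpl in Hy. rewrite Rmin_left, Rmax_right in Hy by lra.
        eexists. apply HD; lra.
    + apply Filter_prod with (fun a => a = eps) (fun b => eps < b).
      * reflexivity.
      * exists eps. auto.
      * intros a b -> Hb y Hy. simpl in Hy. rewrite Rmin_left, Rmax_right in Hy by lra.
        apply (@continuous_ext_loc R_UniformSpace R_UniformSpace (Derive (Fanti w k)) (fun t => t^k * PSeries w (exp (-t)))).
        -- apply (filter_imp (fun t => 0 < t)).
           ++ intros t Ht. symmetry. apply is_derive_unique, HD; auto.
           ++ apply open_gt. lra.
        -- apply (@ex_derive_continuous R_AbsRing R_NormedModule), Hg. lra.
    + intros P HP. apply locally_singleton in HP. exact HP.
    + apply Fanti_lim; auto.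
Qed.

Lemma scalR (x y : R) : scal x y = x * y.
Proof. reflexivity. Qed.
Lemma plusR (x y : R) : plus x y = x + y.
Proof. reflexivity. Qed.

Lemma PS_delta q c z : PSeries (fun m => if Nat.eqb m q then c else 0) z = c * z^q.
Proof.
  rewrite PSeries_eq. apply is_series_unique.
  set (a := fun k => scal (pow_n z k) (if Nat.eqb k q then c else 0)).
  assert (Hs : forall N, @eq R (sum_n a N) (if Nat.leb q N then c * z^q else 0)).
  { induction N.
    - rewrite sum_O. unfold a. change (scal ?x ?y) with (Rmult x y). change (pow_n z ?n) with (z ^ n).
      destruct q; simpl; ring.
    - rewrite sum_Sn, IHN. unfold a. cbv beta. change (plus ?x ?y) with (Rplus x y). change (scal ?x ?y) with (Rmult x y). change (pow_n z ?n) with (z ^ n).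
      destruct (Nat.eqb_spec (S N) q), (Nat.leb_spec q N), (Nat.leb_spec q (S N)); subst;
        try lia; ring. }
  change (is_lim_seq (sum_n a) (c * z^q)).
  apply is_lim_seq_ext_loc with (fun _ => c * z^q); [|apply is_lim_seq_const].
  exists q. intros n Hn. rewrite Hs. destruct (Nat.leb_spec q n); [reflexivity|lia].
Qed.

Lemma exp_pow y m : exp (-y) ^ m = exp (- INR m * y).
Proof.
  induction m.
  - rewrite pow_O. replace (- INR 0 * y) with 0 by (simpl; ring). rewrite exp_0. reflexivity.
  - rewrite <- tech_pow_Rmult, IHm, S_INR, <- exp_plus. f_equal. ring.
Qed.

Lemma RInt_q n k eps : 0 < eps ->
  RInt_gen (fun y => exp (- INR (S n) * y) * y ^ k) (at_point eps) (Rbar_locally p_infty) =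
  sum_f_R0 (fun i => cc k i * eps^i * (/ INR (S n) ^ (k+1-i) * exp (-eps) ^ (S n))) k.
Proof.
  intros He. apply is_RInt_gen_unique.
  set (w := fun m => if Nat.eqb m (S n) then 1 else 0).
  assert (Hw : rad1 w).
  { apply rad1_dom with (fun _ => 1); [|apply rad1_const].
    intros m. unfold w. destruct (Nat.eqb m (S n)); rewrite ?Rabs_R1, ?Rabs_R0; lra. }
  assert (Hw0 : w 0%nat = 0) by reflexivity.
  pose proof (main_int w k eps Hw Hw0 He) as H.
  replace (sum_f_R0 _ k) with (sum_f_R0 (fun i => cc k i * eps^i * Qf w (k+1-i) eps) k).
  2:{ apply sum_eq. intros i _. f_equal. unfold Qf.
      rewrite (PSeries_ext _ (fun m => if Nat.eqb m (S n) then / INR (S n) ^ (k+1-i) else 0)).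
      - apply PS_delta.
      - intros m. unfold wi, w. destruct (Nat.eqb_spec m (S n)); [subst; unfold Rdiv; ring|unfold Rdiv; ring]. }
  eapply is_RInt_gen_ext; [|exact H].
  apply Filter_prod with (fun _ => True) (fun _ => True); [exact I| exists 0; auto|].
  intros _ _ _ _ y _. match goal with |- ?a = ?b => change (@eq R a b) end. unfold w. rewrite PS_delta, exp_pow. ring.
Qed.

Lemma Series_sum (f : nat -> nat -> R) N : (forall i, ex_series (f i)) ->
  ex_series (fun n => sum_f_R0 (fun i => f i n) N) /\
  Series (fun n => sum_f_R0 (fun i => f i n) N) = sum_f_R0 (fun i => Series (f i)) N.
Proof.
  intros Hf. induction N.
  - cbn [sum_f_R0]. split; [apply Hf| reflexivity].
  - destruct IHN as [He Hq]. cbn [sum_f_R0]. split.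
    + apply (ex_series_plus (V := R_NormedModule)); auto.
    + rewrite Series_plus; auto. rewrite Hq. reflexivity.
Qed.

Lemma Zeps_eq eps k j : 0 < eps -> (1 <= j)%nat ->
  Zeps eps k j = sum_f_R0 (fun i => cc k i * eps^i * Qf (pw j) (k+1-i) eps) k.
Proof.
  intros He Hj. unfold Zeps. set (z := exp (-eps)).
  pose proof (expm_bounds eps He) as Hz. fold z in Hz.
  rewrite (Series_ext _ (fun n => sum_f_R0 (fun i =>
      cc k i * eps^i * (wi (pw j) (k+1-i) (S n) * z^(S n))) k)).
  2:{ intros n. rewrite RInt_q by auto. rewrite scal_sum. apply sum_eq. intros i _.
      unfold wi, pw, Rdiv. fold z. ring. }
  assert (Hex : forall p, ex_series (fun n => wi (pw j) p (S n) * z^(S n))).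
  { intros p. assert (H := CV_radius_inside (wi (pw j) p) z).
    destruct H as [l Hl]. { apply rad1_lt; [apply rad1_wi, rad1_pw| lra]. }
    apply (ex_series_incr_1 (fun n => wi (pw j) p n * z^n)).
    apply ex_series_ext with (fun n => scal (pow_n z n) (wi (pw j) p n)).
    - intros n. unfold scal; simpl. unfold mult; simpl. rewrite pow_n_pow. ring.
    - exists l. exact Hl. }
  destruct (Series_sum (fun i n => cc k i * eps^i * (wi (pw j) (k+1-i) (S n) * z^(S n))) k)
    as [_ Hq].
  { intros i. apply ex_series_ext with (fun n => scal (cc k i * eps^i) (wi (pw j) (k+1-i) (S n) * z^(S n))).
    - intros n. reflexivity.
    - apply (ex_series_scal_l (V := R_NormedModule)). apply Hex. }
  rewrite Hq. apply sum_eq. intros i _. rewrite Series_scal_l. f_equal.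
  unfold Qf. fold z. rewrite PSeries_eq.
  rewrite (Series_incr_1 (fun k0 => scal (pow_n z k0) (wi (pw j) (k + 1 - i) k0))).
  2:{ apply ex_series_ext with (fun n => wi (pw j) (k+1-i) n * z^n).
      - intros n. change (scal ?x ?y) with (Rmult x y). change (pow_n z ?m) with (z ^ m).
        match goal with |- ?a = ?b => change (@eq R a b) end. ring.
      - apply ex_series_incr_1. apply Hex. }
  replace (scal (pow_n z 0) (wi (pw j) (k + 1 - i) 0)) with 0.
  2:{ unfold wi, pw. destruct j; [lia|]. change (scal ?x ?y) with (Rmult x y).
        simpl pow. unfold Rdiv. ring. }
  rewrite Rplus_0_l. apply Series_ext. intros n. change (scal ?x ?y) with (Rmult x y).
  change (pow_n z ?m) with (z ^ m). ring.
Qed.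

Lemma is_RInt_gen_sum (g : nat -> R -> R) (l : nat -> R) N
  (Fa Fb : (R -> Prop) -> Prop) {FFa : Filter Fa} {FFb : Filter Fb} :
  (forall j, (j <= N)%nat -> is_RInt_gen (g j) Fa Fb (l j)) ->
  is_RInt_gen (fun x => sum_f_R0 (fun j => g j x) N) Fa Fb (sum_f_R0 l N).
Proof.
  intros H. induction N.
  - cbn [sum_f_R0]. apply H. lia.
  - cbn [sum_f_R0].
    apply (is_RInt_gen_plus (V := R_NormedModule) (fun x => sum_f_R0 (fun j => g j x) N) (g (S N))).
    + apply IHN. intros. apply H. lia.
    + apply H. lia.
Qed.

Lemma sum_n_m_1 (a : nat -> R) n : sum_n_m a 1 (S n) = sum_f_R0 (fun j => a (S j)) n.
Proof. rewrite <- sum_n_m_S, <- sum_n_Reals. reflexivity. Qed.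

Theorem mainTheorem18 (k : nat) (eps : R) :
  (1 <= k)%nat -> 0 < eps ->
  is_RInt_gen (fun x => x ^ k * Derive_n hfun k x / (exp x - 1))
    (at_point eps) (Rbar_locally p_infty)
    (sum_n_m (fun j => (-1) ^ (j + 1) * Kcoef (k + 1) j * Zeps eps k j) 1 (k + 1)).
Proof.
  intros Hk He.
  replace (sum_n_m _ 1 (k + 1)) with (sum_f_R0 (fun j => acoef k (S j) * Zeps eps k (S j)) k).
  2:{ symmetry. replace (k + 1)%nat with (S k) by lia. rewrite sum_n_m_1. apply sum_eq. intros j _.
      unfold acoef. rewrite !Nat.add_1_r. reflexivity. }
  apply (is_RInt_gen_ext (fun x => sum_f_R0 (fun j => acoef k (S j) * (x^k * PSeries (pw (S j)) (exp (-x)))) k)).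
  - apply Filter_prod with (fun a => a = eps) (fun b => eps < b).
    + reflexivity.
    + exists eps. auto.
    + intros a b -> Hb y Hy. simpl in Hy. rewrite Rmin_left, Rmax_right in Hy by lra.
      match goal with |- ?a = ?b => change (@eq R a b) end.
      unfold Rdiv. rewrite Rmult_assoc. fold (Rdiv (Derive_n hfun k y) (exp y - 1)).
      rewrite T_lemma by (auto; lra). rewrite scal_sum. apply sum_eq. intros; ring.
  - apply is_RInt_gen_sum; try typeclasses eauto. intros j Hj.
    apply (is_RInt_gen_scal (V := R_NormedModule) (fun x => x^k * PSeries (pw (S j)) (exp (-x)))).
    rewrite Zeps_eq by (auto; lia).
    apply main_int; auto.
    + apply rad1_pw.
    + unfold pw. simpl. ring.
Qed.
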